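(* Let $G$ be a finite, connected, simple, bridgeless, triangle-free cubic graph and let $\Lambda$ be a valid labeling of $\mathfrak{L}_2(G)$ such that no reduced clique is a self-intersection of any cycle in $\Gamma_\Lambda$. Then for every $\gamma\in\Gamma_\Lambda$ the projected walk $W_\gamma$ is a cycle of $G$.
   Context: $\mathcal{L}(H)$ is the line graph of $H$. Let $\mathcal{T}$ be the set of triangles of $\mathcal{L}(\mathcal{L}(G))$ formed by the three edges of a triangle of $\mathcal{L}(G)$. $\mathfrak{L}_2(G)$ has the vertex set of $\mathcal{L}(\mathcal{L}(G))$ and the edges of $\mathcal{L}(\mathcal{L}(G))$ not in any triangle of $\mathcal{T}$. For each edge $e$ of $G$, the reduced clique $\mathbb{X}_e$ is the subgraph of $\mathfrak{L}_2(G)$ on the four edges of $\mathcal{L}(G)$ incident to $e$, with all edges of $\mathfrak{L}_2(G)$ among them (a 4-cycle). A labeling $\Lambda$ gives each edge of $\mathfrak{L}_2(G)$ a label in $\{0,1\}$ ($1$ = open); it is valid if in every reduced clique each vertex is incident to two edges of that clique with different labels. $\Gamma_\Lambda$ is the set of connected components (cycles) of the subgraph formed by open edges. A reduced clique $\mathbb{X}$ is a self-intersection of $\gamma\in\Gamma_\Lambda$ if both open edges of $\mathbb{X}$ lie on $\gamma$. Projected walk: each vertex $f$ of $\mathfrak{L}_2(G)$ is an unordered pair of distinct edges of $G$ sharing an endpoint; if $\gamma$ has vertices $f_1,\dots,f_m$ in cyclic order, consecutive $f_j,f_{j+1}$ (indices mod $m$) share exactly one edge $e_j$ of $G$, and $W_\gamma$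 is the cyclic sequence $(e_1,\dots,e_m)$. *)

(* Defs.v *)
From mathcomp Require Import all_boot.
Set Implicit Arguments.
Unset Strict Implicit.
Unset Printing Implicit Defensive.

Section Defs.
Variable V : finType.
Variable adj : rel V.

Definition simple_graph := symmetric adj /\ irreflexive adj.
Definition connected_graph := forall x y : V, connect adj x y.
Definition cubic := forall x : V, #|[set y | adj x y]| = 3.
Definition triangle_free := forall x y z : V, ~ [&& adj x y, adj y z & adj x z].
Definition bridgeless := forall x y : V, adj x y ->
  connect (fun a b => adj a b && ([set a; b] != [set x; y])) x y.

Definition edgeG (e : {set V}) : bool :=
  [exists x, exists y, adj x y && (e == [set x; y])].

Definition LG_adj (e e' : {set V}) : bool :=
  [&& edgeG e, edgeG e', e != e' & e :&: e' != set0].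

(** Vertices of L(L(G)) = edges of L(G) = pairs {e,e'} with e, e' adjacent in L(G). *)
Definition LLv (f : {set {set V}}) : bool :=
  [exists e, exists e', LG_adj e e' && (f == [set e; e'])].

Definition LLG_adj (f f' : {set {set V}}) : bool :=
  [&& LLv f, LLv f', f != f' & f :&: f' != set0].

(** The edge {f,f'} of L(L(G)) lies in a triangle of T, i.e. in the triangle of
    L(L(G)) formed by the three edges of some triangle {e1,e2,e3} of L(G). *)
Definition in_T_triangle (f f' : {set {set V}}) : bool :=
  [exists e1, exists e2, exists e3,
     [&& LG_adj e1 e2, LG_adj e2 e3, LG_adj e1 e3,
         f \in [set [set e1; e2]; [set e2; e3]; [set e1; e3]] &
         f' \in [set [set e1; e2]; [set e2; e3]; [set e1; e3]]]].

Definition L2adj (f f' : {set {set V}}) : bool :=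
  LLG_adj f f' && ~~ in_T_triangle f f'.

(** Vertex set of the reduced clique X_e: the edges of L(G) incident to e.
    Its edges are all edges of L_2(G) between these vertices. *)
Definition Xv (e : {set V}) : {set {set {set V}}} := [set f | LLv f && (e \in f)].

(** A labeling assigns a label to each edge {f,f'} of L_2(G) (true = 1 = open). *)
Definition labeling := {set {set {set V}}} -> bool.

Definition open_edge (L : labeling) (f f' : {set {set V}}) : bool :=
  L2adj f f' && L [set f; f'].

Definition valid_labeling (L : labeling) :=
  forall e, edgeG e -> forall f, f \in Xv e ->
    exists g1 g2, [/\ g1 \in Xv e, g2 \in Xv e, L2adj f g1, L2adj f g2 &
                      L [set f; g1] != L [set f; g2]].

(** Gamma_L: connected components of the subgraph formed by open edges,
    represented by their vertex sets. *)
Definition component (L : labeling) (f : {set {set V}}) : {set {set {set V}}} :=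
  [set g | connect (open_edge L) f g].

Definition in_Gamma (L : labeling) (C : {set {set {set V}}}) :=
  exists f, (exists g, open_edge L f g) /\ C = component L f.

Definition self_intersection (L : labeling) (e : {set V}) (C : {set {set {set V}}}) :=
  exists f1 g1 f2 g2,
    [/\ [&& f1 \in Xv e, g1 \in Xv e, f2 \in Xv e & g2 \in Xv e],
        open_edge L f1 g1, open_edge L f2 g2,
        [set f1; g1] != [set f2; g2] &
        [&& f1 \in C, g1 \in C, f2 \in C & g2 \in C]].

Definition cyclic_order (L : labeling) (C : {set {set {set V}}}) (s : seq {set {set V}}) :=
  [/\ uniq s, (forall f, (f \in s) = (f \in C)) & cycle (open_edge L) s].

Definition shared_edge (f f' : {set {set V}}) : {set V} :=
  odflt set0 [pick e in f :&: f'].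

Definition projected_walk (s : seq {set {set V}}) : seq {set V} :=
  [seq shared_edge p.1 p.2 | p <- zip s (rot 1 s)].

Definition is_cycle_of_G (W : seq {set V}) :=
  exists vs : seq V,
    [/\ size vs = size W, 3 <= size vs, uniq vs, cycle adj vs &
        W = [seq [set p.1; p.2] | p <- zip vs (rot 1 vs)]].

End Defs.

(* Main.v *)
Require Import Defs.
From mathcomp Require Import all_boot.
From mathcomp Require Import zify.
Set Implicit Arguments.
Unset Strict Implicit.
Unset Printing Implicit Defensive.

Lemma nth_rot1 (T : Type) (x0 : T) (s : seq T) i :
  i < size s -> nth x0 (rot 1 s) i = nth x0 s (i.+1 %% size s).
Proof.
case: s => [|x t] //= Hi.
rewrite rot1_cons nth_rcons.
case: ltnP => H.
  by rewrite modn_small.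
have -> : i = size t by lia.
by rewrite eqxx modnn.
Qed.

Lemma cycle_nthP (T : Type) (x0 : T) (e : rel T) (s : seq T) :
  reflect (forall i, i < size s -> e (nth x0 s i) (nth x0 s (i.+1 %% size s)))
          (cycle e s).
Proof.
case: s => [|x t]; first by left.
rewrite /cycle -rot1_cons.
apply: (iffP (pathP x0)) => H i Hi.
- have Hi' : i < size (rot 1 (x :: t)) by rewrite size_rot.
  have := H i Hi'. rewrite rot1_cons -rcons_cons nth_rcons Hi.
  by rewrite -rot1_cons nth_rot1.
- rewrite size_rot in Hi.
  have := H i Hi. rewrite rot1_cons -rcons_cons nth_rcons Hi.
  by rewrite -rot1_cons nth_rot1.
Qed.

Lemma set2_two (T : finType) (x y a b : T) :
  a \in [set x; y] -> b \in [set x; y] -> a != b -> [set x; y] = [set a; b].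
Proof.
rewrite !inE => /orP[]/eqP-> /orP[]/eqP->; rewrite ?eqxx //= => _.
by rewrite setUC.
Qed.

Section Gen.
Variable V : finType.
Variable adj : rel V.
Hypothesis Hsym : symmetric adj.

Lemma LG_adj_sym a b : LG_adj adj a b -> LG_adj adj b a.
Proof. by case/and4P=> ea eb nab iab; rewrite /LG_adj ea eb eq_sym nab setIC. Qed.

Lemma LLv_two f x y : LLv adj f -> x \in f -> y \in f -> x != y -> LG_adj adj x y.
Proof.
case/existsP=> a /existsP[b /andP[Hab /eqP Hf]]; subst f.
rewrite !inE => /orP[]/eqP-> /orP[]/eqP->; rewrite ?eqxx //= => _.
exact: LG_adj_sym.
Qed.

Lemma LLv_edge f x : LLv adj f -> x \in f -> edgeG adj x.
Proof.
case/existsP=> a /existsP[b /andP[Hab /eqP Hf]]; subst f.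
by case/and4P: Hab => ea eb _ _; rewrite !inE => /orP[]/eqP->.
Qed.

Lemma shared_in (f g : {set {set V}}) : f :&: g != set0 -> shared_edge f g \in f /\ shared_edge f g \in g.
Proof.
move=> /set0Pn[x Hx]; rewrite /shared_edge.
case: pickP => [y Hy|H]; last by rewrite H in Hx.
by move: Hy; rewrite inE => /andP.
Qed.

Lemma edge_adj x y a b : adj x y -> [set x; y] = [set a; b] -> a != b -> adj a b.
Proof.
move=> Hxy E nab.
have : a \in [set x; y] by rewrite E !inE eqxx.
have : b \in [set x; y] by rewrite E !inE eqxx orbT.
move: nab; rewrite !inE => nab /orP[]/eqP Hb /orP[]/eqP Ha; subst a b; rewrite ?eqxx // in nab *.
by rewrite Hsym.
Qed.

Hypothesis Hcubic : cubic adj.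

Lemma deg4 v a b c d : uniq [:: a; b; c; d] ->
  all (fun e => edgeG adj e && (v \in e)) [:: a; b; c; d] -> False.
Proof.
move=> U Hall.
set Ev := [set e | edgeG adj e && (v \in e)].
have H1 : #|Ev| <= 3.
  rewrite -(Hcubic v).
  apply: leq_trans (leq_imset_card (fun y => [set v; y]) _).
  apply: subset_leq_card; apply/subsetP => e; rewrite inE => /andP[].
  case/existsP=> x /existsP[y /andP[Hxy /eqP ->]].
  rewrite !inE => /orP[]/eqP Hv; subst.
    by apply/imsetP; exists y; rewrite ?inE.
  by apply/imsetP; exists x; [rewrite inE Hsym | rewrite setUC].
have H2 : 4 <= #|Ev|.
  have <- : #|[:: a; b; c; d]| = 4 by apply/card_uniqP.
  apply: subset_leq_card; apply/subsetP => e He.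
  by rewrite inE; move/allP: Hall; apply.
by have := leq_trans H2 H1.
Qed.

End Gen.

Section Main.
Variable V : finType.
Variable adj : rel V.
Hypothesis Hsym : symmetric adj.
Hypothesis Hcubic : cubic adj.
Variable L : labeling V.
Hypothesis Hvalid : valid_labeling adj L.
Variable C : {set {set {set V}}}.
Hypothesis HC : in_Gamma adj L C.
Hypothesis Hnoself : forall e, edgeG adj e -> ~ self_intersection adj L e C.
Variable s : seq {set {set V}}.
Hypothesis Hs : cyclic_order adj L C s.
Variable v0 : V.

Local Notation m := (size s).
Definition fi i := nth set0 s i.
Definition nx i := i.+1 %% m.
Definition pv i := if i == 0 then m.-1 else i.-1.

Lemma m_ge3 : 3 <= m.
Proof.
case: Hs => Us Ms Cs.
case: HC => f0 [[g0 Hfg] HCf].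
have f0C : f0 \in C by rewrite HCf inE connect0.
have g0C : g0 \in C by rewrite HCf inE connect1.
have HfgA := Hfg. case/andP: HfgA => /andP[/and4P[Lf Lg nfg Ifg] _] _.
have [ef eg] := shared_in Ifg.
set eps := shared_edge f0 g0 in ef eg.
case/existsP: (Lf) => a /existsP[b /andP[Hab /eqP Hf0]].
have [eps' [e'f ne']] : exists eps', eps' \in f0 /\ eps' != eps.
  case: (eqVneq a eps) => [Ha|Ha].
  - exists b; rewrite Hf0 !inE eqxx orbT; split=> //.
    rewrite -Ha. case/and4P: Hab => _ _ ? _. by rewrite eq_sym.
  - by exists a; rewrite Hf0 !inE eqxx.
have Xf : f0 \in Xv adj eps' by rewrite inE Lf e'f.
have [g1 [g2 [X1 X2 A1 A2 NL]]] := Hvalid (LLv_edge Lf e'f) Xf.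
have [h [Xh Ah Lh]] : exists h, [/\ h \in Xv adj eps', L2adj adj f0 h & L [set f0; h]].
  move: NL; case E1: (L [set f0; g1]); case E2: (L [set f0; g2]) => // _.
  - by exists g1.
  - by exists g2.
have hC : h \in C by rewrite HCf inE connect1 // /open_edge Ah Lh.
have nfh : f0 != h by case/andP: Ah => /and4P[].
have ngh : g0 != h.
  apply/eqP => Eg; subst h.
  move: Xh; rewrite inE => /andP[_ e'g].
  apply: (negP nfg); apply/eqP.
  case/existsP: (Lg) => c /existsP[d /andP[_ /eqP Hg0]].
  have E1 : [set a; b] = [set eps; eps'].
    by apply: set2_two; rewrite -?Hf0 // eq_sym.
  have E2 : [set c; d] = [set eps; eps'].
    by apply: set2_two; rewrite -?Hg0 // eq_sym.
  by rewrite Hf0 Hg0 E1 E2.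
have -> : 3 = size [:: f0; g0; h] by [].
apply: uniq_leq_size.
  by rewrite /= !inE negb_or nfg nfh ngh.
by move=> x; rewrite !inE Ms => /or3P[]/eqP->.
Qed.

Lemma nxP i : i < m -> (i.+1 < m /\ nx i = i.+1) \/ (i.+1 = m /\ nx i = 0).
Proof.
move=> Hi; rewrite /nx; case: (ltnP i.+1 m) => H.
  by left; split => //; apply: modn_small.
right; have E : i.+1 = m by lia.
by rewrite E modnn.
Qed.

Lemma nx_lt i : i < m -> nx i < m.
Proof. by move=> Hi; rewrite /nx ltn_mod; lia. Qed.

Lemma pv_lt i : i < m -> pv i < m.
Proof. by rewrite /pv; case: eqP => /= H Hi; lia. Qed.

Lemma nx_pv i : i < m -> nx (pv i) = i.
Proof.
move=> Hi; have := nxP (pv_lt Hi); rewrite /pv; case: eqP => /= H; lia.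
Qed.

Lemma pv_nx i : i < m -> pv (nx i) = i.
Proof.
by move=> Hi; case: (nxP Hi) => [[H1 ->]|[H1 ->]]; rewrite /pv /=; lia.
Qed.

Lemma fi_in i : i < m -> fi i \in C.
Proof. by case: Hs => _ Ms _ Hi; rewrite -Ms mem_nth. Qed.

Lemma openA i : i < m -> open_edge adj L (fi i) (fi (nx i)).
Proof. by case: Hs => _ _ /(cycle_nthP set0) H Hi; apply: H. Qed.

Lemma fi_eq i j : i < m -> j < m -> (fi i == fi j) = (i == j).
Proof. by case: Hs => Us _ _ Hi Hj; rewrite /fi nth_uniq. Qed.

Lemma fi_LLv i : i < m -> LLv adj (fi i).
Proof. by move/openA => /andP[/andP[/and4P[]]]. Qed.

Definition ei i := shared_edge (fi i) (fi (nx i)).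

Lemma ei_in i : i < m -> ei i \in fi i /\ ei i \in fi (nx i).
Proof. by move/openA => /andP[/andP[/and4P[_ _ _ I] _] _]; apply: shared_in. Qed.

Lemma ei_edge i : i < m -> edgeG adj (ei i).
Proof. by move=> Hi; apply: (LLv_edge (fi_LLv Hi)); case: (ei_in Hi). Qed.

Lemma ei_inj i j : i < m -> j < m -> ei i = ei j -> i = j.
Proof.
move=> Hi Hj E; case: (eqVneq i j) => // /eqP nij; exfalso.
have H3 := m_ge3.
apply: (Hnoself (ei_edge Hi)).
exists (fi i), (fi (nx i)), (fi j), (fi (nx j)); split.
- have [a1 a2] := ei_in Hi; have [b1 b2] := ei_in Hj.
  by rewrite !inE !fi_LLv ?nx_lt // a1 a2 E b1 b2.
- exact: openA.
- exact: openA.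
- apply/eqP => Eset.
  have : fi i \in [set fi j; fi (nx j)] by rewrite -Eset !inE eqxx.
  have : fi j \in [set fi i; fi (nx i)] by rewrite Eset !inE eqxx.
  rewrite !inE !fi_eq ?nx_lt // => /orP[]/eqP H2 /orP[]/eqP H1;
  have := nxP Hi; have := nxP Hj; lia.
- by rewrite !fi_in ?nx_lt.
Qed.

Lemma ei_eq i j : i < m -> j < m -> (ei i == ei j) = (i == j).
Proof.
move=> Hi Hj; apply/eqP/eqP => [|->] //; exact: ei_inj.
Qed.

Lemma ei_neq_nx i : i < m -> ei i != ei (nx i).
Proof.
move=> Hi; rewrite ei_eq ?nx_lt //; have := m_ge3; have := nxP Hi.
move=> H H3; apply/eqP => E; lia.
Qed.

Lemma fnx_eq i : i < m -> fi (nx i) = [set ei i; ei (nx i)].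
Proof.
move=> Hi; have Lf := fi_LLv (nx_lt Hi).
case/existsP: Lf => a /existsP[b /andP[_ /eqP E]].
rewrite E; apply: set2_two; rewrite -?E.
- by case: (ei_in Hi).
- by case: (ei_in (nx_lt Hi)).
- exact: ei_neq_nx.
Qed.

Lemma LGnx i : i < m -> LG_adj adj (ei i) (ei (nx i)).
Proof.
move=> Hi; apply: (LLv_two (fi_LLv (nx_lt Hi))).
- by case: (ei_in Hi).
- by case: (ei_in (nx_lt Hi)).
- exact: ei_neq_nx.
Qed.

Lemma noF i v : i < m -> v \in ei i -> v \in ei (nx i) -> v \in ei (nx (nx i)) -> False.
Proof.
move=> Hi v1 v2 v3.
have Hj := nx_lt Hi. have Hk := nx_lt Hj.
have := openA Hj; case/andP => /andP[_ nT] _.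
apply: (negP nT).
apply/existsP; exists (ei i); apply/existsP; exists (ei (nx i)); apply/existsP; exists (ei (nx (nx i))).
rewrite LGnx // LGnx // fnx_eq // fnx_eq //.
rewrite !inE !eqxx !orbT /= andbT.
have nik : ei i != ei (nx (nx i)).
  rewrite ei_eq //; have := m_ge3; have := nxP Hi; have := nxP Hj => H1 H2 H3.
  apply/eqP => E; lia.
rewrite /LG_adj !ei_edge // nik /=.
apply/set0Pn; exists v; by rewrite inE v1 v3.
Qed.

Definition vert i := odflt v0 [pick v in ei i :&: ei (nx i)].

Lemma vert_in i : i < m -> vert i \in ei i /\ vert i \in ei (nx i).
Proof.
move=> Hi; have := LGnx Hi; case/and4P => _ _ _ /set0Pn[x Hx].
rewrite /vert; case: pickP => [y Hy|H]; last by rewrite H in Hx.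
by move: Hy; rewrite inE => /andP.
Qed.

Lemma vert_neq i : i < m -> vert i != vert (nx i).
Proof.
move=> Hi; apply/eqP => E.
apply: (noF (v := vert i) Hi).
- by case: (vert_in Hi).
- by case: (vert_in Hi).
- by rewrite E; case: (vert_in (nx_lt Hi)).
Qed.

Lemma eG i : i < m -> ei (nx i) = [set vert i; vert (nx i)] /\ adj (vert i) (vert (nx i)).
Proof.
move=> Hi; have := ei_edge (nx_lt Hi).
case/existsP => x /existsP[y /andP[Hxy /eqP E]].
have E2 : [set x; y] = [set vert i; vert (nx i)].
  apply: set2_two; rewrite -?E.
  - by case: (vert_in Hi).
  - by case: (vert_in (nx_lt Hi)).
  - exact: vert_neq.
split; first by rewrite E E2.
exact: (edge_adj Hsym Hxy E2 (vert_neq Hi)).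
Qed.

Lemma vert_inj i j : i < m -> j < m -> vert i = vert j -> i = j.
Proof.
move=> Hi Hj E; case: (eqVneq i j) => // /eqP nij; exfalso.
have [vi1 vi2] := vert_in Hi; have [vj1 vj2] := vert_in Hj.
case: (eqVneq j (nx i)) => [Hj'|nj].
  apply: (noF (v := vert i) Hi) => //.
  by rewrite E -Hj'.
case: (eqVneq i (nx j)) => [Hi'|ni].
  apply: (noF (v := vert j) Hj) => //.
  by rewrite -E -Hi'.
apply: (deg4 Hsym Hcubic (v := vert i) (a := ei i) (b := ei (nx i)) (c := ei j) (d := ei (nx j))).
- rewrite /= !inE !negb_or !ei_eq ?nx_lt //.
  move/eqP: nj => nj; move/eqP: ni => ni.
  have := nxP Hi; have := nxP Hj => H1 H2.
  have n1 : nx i != nx j by apply/eqP => Ee; lia.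
  rewrite n1 andbT.
  have ne : forall x y : nat, x <> y -> x != y by move=> x y /eqP.
  apply/and4P; split=> //; [apply/and3P; split|..]; apply: ne => Ee; lia.
- by rewrite /= !ei_edge ?nx_lt // vi1 vi2 E vj1 vj2.
Qed.

Lemma main_cycle : is_cycle_of_G adj (projected_walk s).
Proof.
exists (mkseq (fun i => vert (pv i)) m).
have Hm := m_ge3.
have SW : size (projected_walk s) = m by rewrite size_map size_zip size_rot minnn.
split.
- by rewrite size_mkseq SW.
- by rewrite size_mkseq.
- apply/mkseq_uniqP => i j Hi Hj /= E.
  have := vert_inj (pv_lt Hi) (pv_lt Hj) E.
  by move=> H; rewrite -(nx_pv Hi) -(nx_pv Hj) H.
- apply/(cycle_nthP v0) => i; rewrite size_mkseq => Hi.
  rewrite -/(nx i) !nth_mkseq ?nx_lt // pv_nx //.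
  by have := (eG (pv_lt Hi)).2; rewrite nx_pv.
- apply: (@eq_from_nth _ set0).
    by rewrite size_map size_zip size_rot size_mkseq SW minnn.
  move=> i; rewrite SW => Hi.
  rewrite /projected_walk (nth_map (set0, set0)) ?size_zip ?size_rot ?minnn //.
  rewrite nth_zip ?size_rot //= nth_rot1 //.
  rewrite (nth_map (v0, v0)) ?size_zip ?size_rot ?size_mkseq ?minnn //.
  rewrite nth_zip; last by rewrite size_rot.
  rewrite /= nth_rot1 size_mkseq //.
  rewrite -/(nx i) !nth_mkseq ?nx_lt // pv_nx //.
  transitivity (ei i); first by [].
  by have := (eG (pv_lt Hi)).1; rewrite nx_pv.
Qed.

End Main.

Theorem lemma2p16 (V : finType) (adj : rel V)
  (Hsimple : simple_graph adj) (Hconn : connected_graph adj)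
  (Hbridge : bridgeless adj) (Htri : triangle_free adj) (Hcubic : cubic adj)
  (L : labeling V) (Hvalid : valid_labeling adj L)
  (Hnoself : forall e C, edgeG adj e -> in_Gamma adj L C -> ~ self_intersection adj L e C) :
  forall C, in_Gamma adj L C ->
  forall s, cyclic_order adj L C s -> is_cycle_of_G adj (projected_walk s).
Proof.
move=> C HC s Hs; case: Hsimple => Hsym _.
case: (HC) => f0 [[g0 Hfg] _].
have Lf : LLv adj f0 by case/andP: Hfg => /andP[/and4P[]].
case/existsP: Lf => a /existsP[b /andP[Hab _]].
case/and4P: Hab => /existsP[x _] _ _ _.
exact: (main_cycle Hsym Hcubic Hvalid HC (fun e He => Hnoself e C He HC) Hs x).
Qed.
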